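(* Let $L_1$ be a non-degenerate even lattice. Then $\overline{\mathrm{O}(L_1)}=\mathrm{O}(q(L_1))$ if and only if there exists a non-degenerate even lattice $L_2$ satisfying: (1) there exists an even unimodular lattice $\Gamma\subset L_1^\vee\oplus L_2^\vee$ containing $L_1$ and $L_2$ primitively, and it is essentially unique: for any other even unimodular $\Gamma'\subset L_1^\vee\oplus L_2^\vee$ containing $L_1$ and $L_2$ primitively there exist $\varphi_i\in\mathrm{O}(L_i)$ ($i=1,2$) such that (the $\mathbb{Q}$-linear extension of) $\varphi_1\oplus\varphi_2$ maps $\Gamma$ onto $\Gamma'$; (2) the restriction map $\mathrm{O}(\Gamma,L_2)\to\mathrm{O}(L_2)$ is surjective, where $\mathrm{O}(\Gamma,L_2)=\{g\in\mathrm{O}(\Gamma):g(L_2)=L_2\}$.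
   Context: A lattice is a free $\mathbb{Z}$-module of finite rank with an integral symmetric bilinear form; a sublattice $K\subset L$ is primitive if $L/K$ is torsion free. For a non-degenerate even lattice $L$: $L^\vee=\{v\in L\otimes\mathbb{Q}:\langle v,L\rangle\subset\mathbb{Z}\}$, $A(L)=L^\vee/L$, discriminant form $q(L):A(L)\to\mathbb{Q}/2\mathbb{Z}$, $x\bmod L\mapsto\langle x,x\rangle\bmod2\mathbb{Z}$; $\mathrm{O}(q(L))$ the automorphisms of $A(L)$ preserving $q(L)$; $\overline{\mathrm{O}(L)}$ the image of the natural map $\mathrm{O}(L)\to\mathrm{O}(q(L))$. The form on $L_1^\vee\oplus L_2^\vee$ is the orthogonal sum of the $\mathbb{Q}$-extended forms. *)

(* Defs.v *)
(* Lattices of rank n are Z^n (inside Q^n, as rat column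
   vectors) with an integral symmetric Gram matrix G. *)
From HB Require Import structures.
From mathcomp Require Import all_boot all_order all_algebra.
Set Implicit Arguments. Unset Strict Implicit. Unset Printing Implicit Defensive.
Import Order.TTheory GRing.Theory Num.Theory.
Local Open Scope ring_scope.

Definition gramQ n (G : 'M[int]_n) : 'M[rat]_n := map_mx (fun z : int => z%:~R) G.

Definition bq n (A : 'M[rat]_n) (v w : 'cV[rat]_n) : rat := (v^T *m A *m w) ord0 ord0.

Definition inL n (v : 'cV[rat]_n) : Prop := forall i, v i ord0 \is a Num.int.

Definition isEven (x : rat) : Prop := x / 2%:R \is a Num.int.

Definition sym_gram n (G : 'M[int]_n) : Prop := G^T = G.
Definition even_gram n (G : 'M[int]_n) : Prop :=
  forall v : 'cV[rat]_n, inL v -> isEven (bq (gramQ G) v v).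
Definition nondeg_gram n (G : 'M[int]_n) : Prop := \det G != 0.
Definition nde_lattice n (G : 'M[int]_n) : Prop :=
  sym_gram G /\ even_gram G /\ nondeg_gram G.

Definition inDual n (G : 'M[int]_n) (v : 'cV[rat]_n) : Prop :=
  forall w, inL w -> bq (gramQ G) v w \is a Num.int.

(* O(L): Q-linear extensions of isometries of L, i.e. invertible rational
   matrices mapping L onto L and preserving the form *)
Definition OL n (G : 'M[int]_n) (g : 'M[rat]_n) : Prop :=
  g \in unitmx /\
  (forall v, inL v -> inL (g *m v)) /\
  (forall w, inL w -> exists2 v, inL v & g *m v = w) /\
  (forall v w, inL v -> inL w -> bq (gramQ G) (g *m v) (g *m w) = bq (gramQ G) v w).

(* O(q(L)): automorphisms of A(L) = L^v/L preserving q(L), given by a map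
   f on representatives in L^v that is compatible with congruence mod L *)
Definition Oq n (G : 'M[int]_n) (f : 'cV[rat]_n -> 'cV[rat]_n) : Prop :=
  (forall x, inDual G x -> inDual G (f x)) /\
  (forall x y, inDual G x -> inDual G y -> inL (x - y) -> inL (f x - f y)) /\
  (forall x y, inDual G x -> inDual G y -> inL (f (x + y) - (f x + f y))) /\
  (forall x y, inDual G x -> inDual G y -> inL (f x - f y) -> inL (x - y)) /\
  (forall y, inDual G y -> exists2 x, inDual G x & inL (f x - y)) /\
  (forall x, inDual G x -> isEven (bq (gramQ G) (f x) (f x) - bq (gramQ G) x x)).

Definition induces n (g : 'M[rat]_n) (f : 'cV[rat]_n -> 'cV[rat]_n) (G : 'M[int]_n) : Prop :=
  forall x, inDual G x -> inL (g *m x - f x).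

Definition OL_onto_Oq n (G : 'M[int]_n) : Prop :=
  forall f, Oq G f -> exists2 g, OL G g & induces g f G.

Definition gram_sum n1 n2 (G1 : 'M[int]_n1) (G2 : 'M[int]_n2) : 'M[rat]_(n1 + n2) :=
  block_mx (gramQ G1) 0 0 (gramQ G2).

Definition inL1 n1 n2 (v : 'cV[rat]_(n1 + n2)) : Prop := inL (usubmx v) /\ dsubmx v = 0.
Definition inL2 n1 n2 (v : 'cV[rat]_(n1 + n2)) : Prop := usubmx v = 0 /\ inL (dsubmx v).

Definition primitive_in n (K Gam : 'cV[rat]_n -> Prop) : Prop :=
  forall v, Gam v -> forall k : nat, (0 < k)%N -> K (k%:R *: v) -> K v.

Definition good_overlattice n1 n2 (G1 : 'M[int]_n1) (G2 : 'M[int]_n2)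
    (Gam : 'cV[rat]_(n1 + n2) -> Prop) : Prop :=
  let B := bq (gram_sum G1 G2) in
  Gam 0 /\ (forall v w, Gam v -> Gam w -> Gam (v - w)) /\
  (forall v, Gam v -> inDual G1 (usubmx v) /\ inDual G2 (dsubmx v)) /\
  (forall v, inL1 v -> Gam v) /\ (forall v, inL2 v -> Gam v) /\
  primitive_in (@inL1 n1 n2) Gam /\ primitive_in (@inL2 n1 n2) Gam /\
  (forall v w, Gam v -> Gam w -> B v w \is a Num.int) /\
  (forall v, Gam v -> isEven (B v v)) /\
  (* unimodular: Gam^v = Gam *)
  (forall v, (forall w, Gam w -> B v w \is a Num.int) -> Gam v).

Definition OGam n (A : 'M[rat]_n) (Gam : 'cV[rat]_n -> Prop) (g : 'M[rat]_n) : Prop :=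
  g \in unitmx /\
  (forall v, Gam v -> Gam (g *m v)) /\
  (forall w, Gam w -> exists2 v, Gam v & g *m v = w) /\
  (forall v w, Gam v -> Gam w -> bq A (g *m v) (g *m w) = bq A v w).

Definition ess_unique n1 n2 (G1 : 'M[int]_n1) (G2 : 'M[int]_n2)
    (Gam : 'cV[rat]_(n1 + n2) -> Prop) : Prop :=
  forall Gam' : 'cV[rat]_(n1 + n2) -> Prop, good_overlattice G1 G2 Gam' ->
  exists phi1 : 'M[rat]_n1, exists phi2 : 'M[rat]_n2,
    [/\ OL G1 phi1, OL G2 phi2 &
      forall w, Gam' w <-> exists2 v, Gam v & block_mx phi1 0 0 phi2 *m v = w].

Definition restr_onto n1 n2 (G1 : 'M[int]_n1) (G2 : 'M[int]_n2)
    (Gam : 'cV[rat]_(n1 + n2) -> Prop) : Prop :=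
  forall h : 'M[rat]_n2, OL G2 h ->
  exists g : 'M[rat]_(n1 + n2),
    [/\ OGam (gram_sum G1 G2) Gam g,
        (forall v, inL2 v -> inL2 (g *m v)),
        (forall w, inL2 w -> exists2 v, inL2 v & g *m v = w) &
        forall y : 'cV[rat]_n2, inL y -> g *m col_mx 0 y = col_mx 0 (h *m y)].

(* Main.v *)
Require Import Defs.
From HB Require Import structures.
From mathcomp Require Import all_boot all_order all_algebra.
From Stdlib Require Import Classical ClassicalEpsilon.
Set Implicit Arguments. Unset Strict Implicit. Unset Printing Implicit Defensive.
Import Order.TTheory GRing.Theory Num.Theory.
Local Open Scope ring_scope.

Definition intmx m n (M : 'M[rat]_(m, n)) : Prop := forall i j, M i j \is a Num.int.

Lemma intmxM m n p (M : 'M[rat]_(m, n)) (N : 'M[rat]_(n, p)) :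
  intmx M -> intmx N -> intmx (M *m N).
Proof. move=> hM hN i j; rewrite mxE; apply: rpred_sum => k _; exact: rpredM. Qed.

Lemma intmxD m n (M N : 'M[rat]_(m, n)) : intmx M -> intmx N -> intmx (M + N).
Proof. by move=> hM hN i j; rewrite mxE; apply: rpredD. Qed.
Lemma intmxN m n (M : 'M[rat]_(m, n)) : intmx M -> intmx (- M).
Proof. by move=> hM i j; rewrite mxE rpredN. Qed.
Lemma intmxB m n (M N : 'M[rat]_(m, n)) : intmx M -> intmx N -> intmx (M - N).
Proof. by move=> hM hN; apply: intmxD => //; apply: intmxN. Qed.
Lemma intmx0 m n : intmx (0 : 'M[rat]_(m, n)).
Proof. by move=> i j; rewrite mxE. Qed.
Lemma intmx1 n : intmx (1%:M : 'M[rat]_n).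
Proof. by move=> i j; rewrite mxE; case: (i == j). Qed.
Lemma intmx_tr m n (M : 'M[rat]_(m, n)) : intmx M -> intmx M^T.
Proof. by move=> hM i j; rewrite mxE. Qed.
Lemma intmx_map m n (M : 'M[int]_(m, n)) : intmx (map_mx (fun z : int => z%:~R) M).
Proof. by move=> i j; rewrite mxE; apply: rpred_int. Qed.
Lemma intmxZ m n (z : int) (M : 'M[rat]_(m, n)) : intmx M -> intmx (z%:~R *: M).
Proof. by move=> hM i j; rewrite mxE; apply: rpredM => //; apply: rpred_int. Qed.
Lemma intmx_col m n1 n2 (x : 'M[rat]_(n1, m)) (y : 'M[rat]_(n2, m)) :
  intmx (col_mx x y) <-> intmx x /\ intmx y.
Proof.
split.
  move=> h; split=> i j; [move: (h (lshift _ i) j) | move: (h (rshift _ i) j)];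
  by rewrite ?col_mxEu ?col_mxEd.
case=> hx hy i j; rewrite mxE; case: (split i) => k; [exact: hx | exact: hy].
Qed.

Lemma inLE n (v : 'cV[rat]_n) : inL v <-> intmx v.
Proof. split=> h i; last exact: h. by move=> j; rewrite (ord1 j). Qed.

Lemma intmx_floor m n (M : 'M[rat]_(m, n)) : intmx M ->
  M = map_mx (fun z : int => z%:~R) (map_mx (@Num.floor _) M).
Proof. move=> h; apply/matrixP=> i j; rewrite !mxE; apply/esym/eqP; by rewrite -intrEfloor. Qed.

Section Basics.
Variable n : nat.
Implicit Types (A : 'M[rat]_n) (v w u : 'cV[rat]_n).

Lemma bqE A v w : bq A v w = (v^T *m A *m w) ord0 ord0.
Proof. by []. Qed.

Lemma bqDl A u v w : bq A (u + v) w = bq A u w + bq A v w.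
Proof. by rewrite /bq linearD /= !mulmxDl mxE. Qed.
Lemma bqDr A u v w : bq A w (u + v) = bq A w u + bq A w v.
Proof. by rewrite /bq mulmxDr mxE. Qed.
Lemma bqZl A (a : rat) v w : bq A (a *: v) w = a * bq A v w.
Proof. by rewrite /bq linearZ /= -!scalemxAl mxE. Qed.
Lemma bqZr A (a : rat) v w : bq A w (a *: v) = a * bq A w v.
Proof. by rewrite /bq -scalemxAr mxE. Qed.
Lemma bqNl A v w : bq A (- v) w = - bq A v w.
Proof. by rewrite -scaleN1r bqZl mulN1r. Qed.
Lemma bqNr A v w : bq A w (- v) = - bq A w v.
Proof. by rewrite -scaleN1r bqZr mulN1r. Qed.
Lemma bqBl A u v w : bq A (u - v) w = bq A u w - bq A v w.
Proof. by rewrite bqDl bqNl. Qed.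
Lemma bqBr A u v w : bq A w (u - v) = bq A w u - bq A w v.
Proof. by rewrite bqDr bqNr. Qed.
Lemma bq0l A w : bq A 0 w = 0.
Proof. by rewrite -(scale0r (0 : 'cV[rat]_n)) bqZl mul0r. Qed.
Lemma bq0r A w : bq A w 0 = 0.
Proof. by rewrite -(scale0r (0 : 'cV[rat]_n)) bqZr mul0r. Qed.

Lemma bq_sym A v w : A^T = A -> bq A v w = bq A w v.
Proof.
move=> hA; rewrite /bq.
have -> : (v^T *m A *m w) ord0 ord0 = ((v^T *m A *m w)^T) ord0 ord0 by rewrite [RHS]mxE.
by rewrite !trmx_mul trmxK hA mulmxA.
Qed.
End Basics.

Section Lat.
Variable n : nat.
Variable G : 'M[int]_n.
Local Notation A := (gramQ G).
Implicit Types (v w u z x y : 'cV[rat]_n).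

Lemma gramQ_tr : sym_gram G -> A^T = A.
Proof. by move=> h; rewrite /gramQ map_trmx h. Qed.

Lemma bq_alt v w : sym_gram G -> bq A v w = ((A *m v)^T *m w) ord0 ord0.
Proof. by move=> h; rewrite /bq trmx_mul gramQ_tr. Qed.

Lemma bqL_int v w : inL v -> inL w -> bq A v w \is a Num.int.
Proof.
move=> /inLE hv /inLE hw; apply: intmxM; last exact: hw.
apply: intmxM; [exact: intmx_tr | exact: intmx_map].
Qed.

Lemma inL_delta (i : 'I_n) : inL (delta_mx i ord0 : 'cV[rat]_n).
Proof. by move=> k; rewrite mxE; case: (_ && _). Qed.

Lemma mul_delta_entry m (M : 'M[rat]_(1, m)) (i : 'I_m) : (M *m delta_mx i (ord0 : 'I_1)) ord0 ord0 = M ord0 i.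
Proof. by rewrite -colE mxE. Qed.

Lemma inDualE v : sym_gram G -> inDual G v <-> inL (A *m v).
Proof.
move=> hs; split.
  move=> h i; move: (h _ (inL_delta i)); by rewrite bq_alt // mul_delta_entry mxE.
move=> h w hw; rewrite bq_alt //; apply: intmxM; [apply: intmx_tr; exact/inLE | exact/inLE].
Qed.

Lemma inL0 : inL (0 : 'cV[rat]_n). Proof. by apply/inLE/intmx0. Qed.
Lemma inLD v w : inL v -> inL w -> inL (v + w).
Proof. by move=> /inLE h /inLE h'; apply/inLE/intmxD. Qed.
Lemma inLN v : inL v -> inL (- v).
Proof. by move=> /inLE h; apply/inLE/intmxN. Qed.
Lemma inLB v w : inL v -> inL w -> inL (v - w).
Proof. by move=> h h'; apply: inLD => //; apply: inLN. Qed.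
Lemma inLZ (k : int) v : inL v -> inL (k%:~R *: v).
Proof. by move=> /inLE h; apply/inLE/intmxZ. Qed.

Lemma inL_dual v : sym_gram G -> inL v -> inDual G v.
Proof. by move=> hs hv w hw; apply: bqL_int. Qed.

Lemma dual0 : inDual G 0.
Proof. by move=> w _; rewrite bq0l. Qed.
Lemma dualD v w : inDual G v -> inDual G w -> inDual G (v + w).
Proof. by move=> h h' u hu; rewrite bqDl rpredD ?h ?h'. Qed.
Lemma dualN v : inDual G v -> inDual G (- v).
Proof. by move=> h u hu; rewrite bqNl rpredN h. Qed.
Lemma dualB v w : inDual G v -> inDual G w -> inDual G (v - w).
Proof. by move=> h h'; apply: dualD => //; apply: dualN. Qed.
Lemma dualZ (k : int) v : inDual G v -> inDual G (k%:~R *: v).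
Proof. by move=> h u hu; rewrite bqZl rpredM ?h ?rpred_int. Qed.

Lemma dual_detZ v : sym_gram G -> inDual G v -> inL ((\det G)%:~R *: v).
Proof.
move=> hs /(inDualE _ hs) /inLE h; apply/inLE.
have -> : (\det G)%:~R *: v = \adj A *m (A *m v).
  by rewrite mulmxA mul_adj_mx /gramQ det_map_mx mul_scalar_mx.
apply: intmxM => //; rewrite /gramQ -map_mx_adj; exact: intmx_map.
Qed.

Lemma gram_unit : nondeg_gram G -> A \in unitmx.
Proof. by move=> h; rewrite unitmxE /gramQ det_map_mx unitfE intr_eq0. Qed.

Lemma dual_scale : nde_lattice G ->
  exists2 k : nat, (0 < k)%N & forall v, inDual G v -> inL (k%:R *: v).
Proof.
case=> hs [he hn]; exists (`|\det G| ^ 2)%N.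
  by rewrite expn_gt0 absz_gt0 hn.
move=> v hv; have -> : ((`|\det G| ^ 2)%N%:R : rat) = (\det G)%:~R * (\det G)%:~R.
  by rewrite natrX natr_absz intr_norm real_normK ?num_real // expr2.
rewrite -scalerA; apply: inLZ; exact: dual_detZ.
Qed.

Lemma double_dual u : nde_lattice G ->
  (forall z, inDual G z -> bq A u z \is a Num.int) -> inL u.
Proof.
case=> hs [he hn] h i.
pose z : 'cV[rat]_n := invmx A *m delta_mx i ord0.
have hz : inDual G z.
  apply/(inDualE _ hs); rewrite /z mulmxA mulmxV ?gram_unit // mul1mx; exact: inL_delta.
move: (h z hz); rewrite /bq /z !mulmxA -(mulmxA _ A) mulmxV ?gram_unit //.
by rewrite mulmx1 mul_delta_entry mxE.
Qed.

End Lat.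

Definition pb (P : Prop) : bool := if excluded_middle_informative P then true else false.
Lemma pbT (P : Prop) : P -> pb P = true.
Proof. by rewrite /pb; case: excluded_middle_informative. Qed.
Lemma pbP (P : Prop) : pb P = true -> P.
Proof. by rewrite /pb; case: excluded_middle_informative. Qed.

Lemma mulmx_col_sum n m (M : 'M[rat]_(n, m)) (c : 'cV[rat]_m) :
  M *m c = \sum_j (c j ord0) *: col j M.
Proof.
apply/matrixP=> i k; rewrite mxE summxE; apply: eq_bigr => j _.
by rewrite !mxE (ord1 k) mulrC.
Qed.

Section Grp.
Variable n : nat.
Variable S : 'cV[rat]_n -> Prop.
Hypothesis S0 : S 0.
Hypothesis SB : forall v w, S v -> S w -> S (v - w).

Lemma SN v : S v -> S (- v).
Proof. by move=> h; rewrite -sub0r; apply: SB. Qed.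
Lemma SD v w : S v -> S w -> S (v + w).
Proof. by move=> h h'; rewrite -[w]opprK; apply: SB => //; apply: SN. Qed.
Lemma Snat (k : nat) v : S v -> S (k%:R *: v).
Proof. move=> h; elim: k => [|k ih]; first by rewrite scale0r.
by rewrite mulrS scalerDl scale1r; apply: SD. Qed.
Lemma Sint (z : int) v : S v -> S (z%:~R *: v).
Proof.
move=> h; case: z => k; first by rewrite -pmulrn; apply: Snat.
by rewrite NegzE mulrNz scaleNr; apply: SN; rewrite -pmulrn; apply: Snat.
Qed.
Lemma Ssum (I : finType) (F : I -> 'cV[rat]_n) : (forall i, S (F i)) -> S (\sum_i F i).
Proof. move=> h; apply: (big_ind S) => //; first exact: SD. Qed.
Lemma Scomb m (M : 'M[rat]_(n, m)) c : (forall j, S (col j M)) -> inL c -> S (M *m c).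
Proof.
move=> hM hc; rewrite mulmx_col_sum; apply: Ssum => j.
have /intrP [z ->] := hc j; exact: Sint.
Qed.
End Grp.

Lemma gens n (S : 'cV[rat]_n -> Prop) (D : nat) : (0 < D)%N ->
  S 0 -> (forall v w, S v -> S w -> S (v - w)) ->
  (forall v, inL v -> S v) -> (forall v, S v -> inL (D%:R *: v)) ->
  exists k, exists N : 'M[rat]_(n, n + k), intmx (D%:R *: N) /\
    forall v, S v <-> exists2 c, inL c & v = N *m c.
Proof.
move=> D0 S0 SB SL Sdl.
pose T := 'cV['I_D]_n.
pose ra (a : T) : 'cV[rat]_n := D%:R^-1 *: map_mx (fun i : 'I_D => (i : nat)%:R) a.
pose K := #|{: T}|.
pose B : 'M[rat]_(n, K) := \matrix_(i, j) (if pb (S (ra (enum_val j))) then ra (enum_val j) i ord0 else 0).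
have colB j : col j B = if pb (S (ra (enum_val j))) then ra (enum_val j) else 0.
  apply/matrixP=> i k; rewrite !mxE (ord1 k); by case: pb; rewrite ?mxE.
have DnZ : (D%:R : rat) != 0 by rewrite pnatr_eq0 -lt0n.
exists K, (row_mx 1%:M B); split.
  move=> i j; rewrite !mxE; case: (split j) => k; rewrite !mxE.
    by rewrite rpredM ?rpred_nat //; case: (_ == _).
  case: pb; last by rewrite mulr0.
  by rewrite mulrA mulfV // mul1r rpred_nat.
move=> v; split; last first.
  case=> c hc ->; rewrite -[c]vsubmxK mul_row_col mul1mx.
  have /intmx_col [h1 h2] : intmx (col_mx (usubmx c) (dsubmx c)) by rewrite vsubmxK; exact/inLE.
  apply: (SD S0 SB); first by apply: SL; apply/inLE.
  apply: (Scomb S0 SB); last exact/inLE.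
  by move=> j; rewrite colB; case: ifP => // /pbP.
move=> hv; have /inLE hu := Sdl _ hv.
have [uz euz] : exists uz, D%:R *: v = map_mx (fun z : int => z%:~R) uz.
  by eexists; exact: intmx_floor.
pose q : 'cV[int]_n := \col_i ((uz i ord0) %/ D)%Z.
pose r : 'cV[int]_n := \col_i ((uz i ord0) %% D)%Z.
have Dz0 : (D%:Z != 0) by rewrite -lt0n.
have rlt i : (`|r i ord0| < D)%N.
  by rewrite -ltz_nat gez0_abs mxE ?modz_ge0 // (ltz_mod _ Dz0).
pose a : T := \col_i (Ordinal (rlt i)).
have era : ra a = v - map_mx (fun z : int => z%:~R) q.
  apply/matrixP=> i k; rewrite (ord1 k) !mxE /=.
  have e : v i ord0 = (uz i ord0)%:~R / D%:R.
    have := congr1 (fun M : 'cV[rat]_n => M i ord0) euz; rewrite !mxE => <-.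
    by rewrite mulrC mulKf.
  rewrite natr_absz ger0_norm; last by rewrite /r mxE modz_ge0.
  rewrite /r /q !mxE e.
  have aux (x : int) : D%:R^-1 * (x %% D)%Z%:~R = x%:~R / D%:R - (x %/ D)%Z%:~R :> rat.
    rewrite intrD intrN intrM -[((D : int)%:~R : rat)]pmulrn mulrDr mulrN.
    by rewrite [_ * (_ * _)]mulrC -mulrA mulfV // mulr1 mulrC.
  exact: aux.
have Sa : S (ra a) by rewrite era; apply: SB => //; apply/SL/inLE/intmx_map.
exists (col_mx (map_mx (fun z : int => z%:~R) q) (delta_mx (enum_rank a) ord0)).
  apply/inLE/intmx_col; split; [exact: intmx_map | exact/inLE/inL_delta].
rewrite mul_row_col mul1mx -colE colB enum_rankK pbT // era.
by rewrite addrC subrK.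
Qed.

Lemma lattice_basis n (S : 'cV[rat]_n -> Prop) (D : nat) : (0 < D)%N ->
  S 0 -> (forall v w, S v -> S w -> S (v - w)) ->
  (forall v, inL v -> S v) -> (forall v, S v -> inL (D%:R *: v)) ->
  exists2 P : 'M[rat]_n, P \in unitmx & forall v, S v <-> exists2 a, inL a & v = P *m a.
Proof.
move=> D0 S0 SB SL Sdl.
have [k [N [hN eS]]] := gens D0 S0 SB SL Sdl.
have [Nz eNz] : exists Nz, D%:R *: N = map_mx (fun z : int => z%:~R) Nz.
  by eexists; exact: intmx_floor.
case: (int_Smith_normal_form Nz) => Lz Lu [Rz Ru [d _ eN]].
pose mp m1 m2 (M : 'M[int]_(m1, m2)) := map_mx (fun z : int => z%:~R) M : 'M[rat]_(m1, m2).
have mpM m1 m2 m3 (M1 : 'M[int]_(m1, m2)) (M2 : 'M[int]_(m2, m3)) : mp _ _ (M1 *m M2) = mp _ _ M1 *m mp _ _ M2.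
  by rewrite /mp map_mxM.
pose Dm : 'M[int]_(n, n + k) := \matrix_(i, j) (d`_i *+ (i == j :> nat)).
have eDm : Dm = row_mx (lsubmx Dm) 0.
  rewrite -[LHS]hsubmxK; congr row_mx; apply/matrixP=> i j; rewrite !mxE /=.
  by rewrite ltn_eqF ?mulr0n //; apply: ltn_addr.
have DnZ : (D%:R : rat) != 0 by rewrite pnatr_eq0 -lt0n.
have eN' : N = D%:R^-1 *: (mp _ _ Lz *m mp _ _ Dm *m mp _ _ Rz).
  by rewrite -!mpM /Dm -eN /mp -eNz scalerA mulVf // scale1r.
have mpDm : mp _ _ Dm = row_mx (mp _ _ (lsubmx Dm)) 0.
  by rewrite {1}eDm /mp map_row_mx map_mx0.
pose P := D%:R^-1 *: (mp _ _ Lz *m mp _ _ (lsubmx Dm)).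
have intmp m1 m2 (M : 'M[int]_(m1, m2)) : intmx (mp _ _ M) by exact: intmx_map.
have eSP : forall v, S v <-> exists2 a, inL a & v = P *m a.
  move=> v; rewrite eS; split.
    case=> c hc ->; exists (usubmx (mp _ _ Rz *m c)).
      apply/inLE; have /intmx_col [] // : intmx (col_mx (usubmx (mp _ _ Rz *m c)) (dsubmx (mp _ _ Rz *m c))).
      by rewrite vsubmxK; apply: intmxM => //; exact/inLE.
    rewrite eN' /P -!scalemxAl -!mulmxA; congr (_ *: (_ *m _)).
    by rewrite -{1}[mp _ _ Rz *m c]vsubmxK mpDm mul_row_col mul0mx addr0.
  case=> a ha ->; exists (mp _ _ (invmx Rz) *m col_mx a 0).
    apply/inLE/intmxM => //; apply/intmx_col; split; [exact/inLE | exact: intmx0].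
  rewrite eN' /P -!scalemxAl -!mulmxA; congr (_ *: (_ *m _)).
  rewrite (mulmxA (mp _ _ Rz)) -mpM mulmxV // /mp map_mx1 mul1mx.
  by rewrite -/(mp _ _ Dm) mpDm mul_row_col mul0mx addr0.
exists P => //.
have : forall j : 'I_n, exists2 a, inL a & (delta_mx j ord0 : 'cV[rat]_n) = P *m a.
  by move=> j; apply/eSP/SL/inL_delta.
case/fin_all_exists2=> aa _ haa.
pose Q := \matrix_(i, j) aa j i ord0.
have : P *m Q = 1%:M.
  apply/matrixP=> i j; move: (congr1 (fun M : 'cV[rat]_n => M i ord0) (haa j)).
  rewrite !mxE eqxx andbT /= => ->; apply: eq_bigr => l _; by rewrite !mxE.
by case/mulmx1_unit.
Qed.

Lemma dual_fill n (G : 'M[int]_n) (S : 'cV[rat]_n -> Prop) : nde_lattice G ->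
  S 0 -> (forall v w, S v -> S w -> S (v - w)) ->
  (forall v, inL v -> S v) -> (forall v, S v -> inDual G v) ->
  (forall x, (forall s, S s -> bq (gramQ G) x s \is a Num.int) -> inL x) ->
  forall x, inDual G x -> S x.
Proof.
move=> hG S0 SB SL SD Sdd x hx.
have [k k0 hk] := dual_scale hG.
have [P Pu eSP] := lattice_basis k0 S0 SB SL (fun v hv => hk v (SD v hv)).
have hs := hG.1.
have Au := gram_unit hG.2.2.
pose A := gramQ G.
have PAu : P^T *m A \in unitmx by rewrite unitmx_mul unitmx_tr Pu Au.
pose z (j : 'I_n) : 'cV[rat]_n := invmx (P^T *m A) *m delta_mx j ord0.
have ez j b : bq A (P *m b) (z j) = b j ord0.
  rewrite /bq /z trmx_mul -!mulmxA (mulmxA (P^T) A) (mulmxA (P^T *m A)) mulmxV //.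
  by rewrite mul1mx mul_delta_entry mxE.
have zL j : inL (z j).
  apply: Sdd => s /eSP [a ha ->]; rewrite bq_sym ?gramQ_tr // ez; exact: ha.
apply/eSP; exists (invmx P *m x); last by rewrite mulmxA mulmxV ?mul1mx.
move=> j; rewrite -ez mulmxA mulmxV ?mul1mx //; exact: hx.
Qed.

Section Sum.
Variables (n1 n2 : nat) (G1 : 'M[int]_n1) (G2 : 'M[int]_n2).
Local Notation AA := (gram_sum G1 G2).

Lemma bq_sum x y x' y' :
  bq AA (col_mx x y) (col_mx x' y') = bq (gramQ G1) x x' + bq (gramQ G2) y y'.
Proof.
rewrite /bq /gram_sum tr_col_mx mul_row_block !mulmx0 !addr0 !add0r mul_row_col mxE.
by [].
Qed.

Lemma bq_sum' v w :
  bq AA v w = bq (gramQ G1) (usubmx v) (usubmx w) + bq (gramQ G2) (dsubmx v) (dsubmx w).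
Proof. by rewrite -bq_sum !vsubmxK. Qed.

Lemma inL1_col (x : 'cV[rat]_n1) (y : 'cV[rat]_n2) : inL1 (col_mx x y) <-> inL x /\ y = 0.
Proof. by rewrite /inL1 col_mxKu col_mxKd. Qed.
Lemma inL2_col (x : 'cV[rat]_n1) (y : 'cV[rat]_n2) : inL2 (col_mx x y) <-> x = 0 /\ inL y.
Proof. by rewrite /inL2 col_mxKu col_mxKd. Qed.

Lemma col_sub (x x' : 'cV[rat]_n1) (y y' : 'cV[rat]_n2) :
  col_mx x y - col_mx x' y' = col_mx (x - x') (y - y').
Proof. by rewrite opp_col_mx add_col_mx. Qed.
Lemma col_add (x x' : 'cV[rat]_n1) (y y' : 'cV[rat]_n2) :
  col_mx x y + col_mx x' y' = col_mx (x + x') (y + y').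
Proof. by rewrite add_col_mx. Qed.

Variable Gam : 'cV[rat]_(n1 + n2) -> Prop.
Hypothesis h1 : nde_lattice G1.
Hypothesis h2 : nde_lattice G2.
Hypothesis hG : good_overlattice G1 G2 Gam.

Lemma Gam0 : Gam 0. Proof. by case: hG. Qed.
Lemma GamB v w : Gam v -> Gam w -> Gam (v - w).
Proof. by case: hG => _ [h _]; apply: h. Qed.
Lemma GamD v w : Gam v -> Gam w -> Gam (v + w).
Proof. exact: (SD Gam0 GamB). Qed.
Lemma GamN v : Gam v -> Gam (- v).
Proof. exact: (SN Gam0 GamB). Qed.
Lemma Gam_dual x y : Gam (col_mx x y) -> inDual G1 x /\ inDual G2 y.
Proof. by case: hG => _ [_ [h _]] /h; rewrite col_mxKu col_mxKd. Qed.
Lemma GamL1 x : inL x -> Gam (col_mx x 0).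
Proof. by case: hG => _ [_ [_ [h _]]] hx; apply: h; rewrite inL1_col. Qed.
Lemma GamL2 y : inL y -> Gam (col_mx 0 y).
Proof. by case: hG => _ [_ [_ [_ [h _]]]] hy; apply: h; rewrite inL2_col. Qed.
Lemma Gam_int v w : Gam v -> Gam w -> bq AA v w \is a Num.int.
Proof. by case: hG => _ [_ [_ [_ [_ [_ [_ [h _]]]]]]]; apply: h. Qed.
Lemma Gam_even v : Gam v -> isEven (bq AA v v).
Proof. by case: hG => _ [_ [_ [_ [_ [_ [_ [_ [h _]]]]]]]]; apply: h. Qed.
Lemma Gam_unimod v : (forall w, Gam w -> bq AA v w \is a Num.int) -> Gam v.
Proof. by case: hG => _ [_ [_ [_ [_ [_ [_ [_ [_ h]]]]]]]]; apply: h. Qed.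

Lemma prim1 x : Gam (col_mx x 0) -> inL x.
Proof.
move=> hx; have [k k0 hk] := dual_scale h1.
have := (Gam_dual hx).1 => /hk hkx.
case: hG => _ [_ [_ [_ [_ [p _]]]]].
have : inL1 (col_mx x (0 : 'cV[rat]_n2)).
  apply: (p _ hx k k0); by rewrite scale_col_mx scaler0 inL1_col.
by case/inL1_col.
Qed.
Lemma prim2 y : Gam (col_mx 0 y) -> inL y.
Proof.
move=> hy; have [k k0 hk] := dual_scale h2.
have := (Gam_dual hy).2 => /hk hky.
case: hG => _ [_ [_ [_ [_ [_ [p _]]]]]].
have : inL2 (col_mx (0 : 'cV[rat]_n1) y).
  apply: (p _ hy k k0); by rewrite scale_col_mx scaler0 inL2_col.
by case/inL2_col.
Qed.

Lemma glue1 x : inDual G1 x -> exists y, Gam (col_mx x y).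
Proof.
move=> hx; pose S := fun x => exists y, Gam (col_mx x y).
apply: (@dual_fill _ G1 S h1) hx.
- by exists 0; rewrite col_mx0; exact: Gam0.
- move=> v w [y hy] [y' hy']; exists (y - y'); rewrite -col_sub; exact: GamB.
- move=> v hv; exists 0; exact: GamL1.
- by move=> v [y /Gam_dual []].
move=> z hz; apply: prim1; apply: Gam_unimod => w hw.
rewrite bq_sum' col_mxKu col_mxKd bq0l addr0; apply: hz.
by exists (dsubmx w); rewrite vsubmxK.
Qed.

Lemma glue2 y : inDual G2 y -> exists x, Gam (col_mx x y).
Proof.
move=> hy; pose S := fun y => exists x, Gam (col_mx x y).
apply: (@dual_fill _ G2 S h2) hy.
- by exists 0; rewrite col_mx0; exact: Gam0.
- move=> v w [y0 hy0] [y' hy']; exists (y0 - y'); rewrite -col_sub; exact: GamB.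
- move=> v hv; exists 0; exact: GamL2.
- by move=> v [x /Gam_dual []].
move=> z hz; apply: prim2; apply: Gam_unimod => w hw.
rewrite bq_sum' col_mxKu col_mxKd bq0l add0r; apply: hz.
by exists (usubmx w); rewrite vsubmxK.
Qed.

End Sum.

Lemma bq_delta n (M : 'M[rat]_n) i j : bq M (delta_mx i ord0) (delta_mx j ord0) = M i j.
Proof.
rewrite /bq mul_delta_entry trmx_delta.
by rewrite -rowE mxE.
Qed.

Lemma bq_mat n (M : 'M[rat]_n) (g : 'M[rat]_n) v w : bq M (g *m v) (g *m w) = bq (g^T *m M *m g) v w.
Proof. by rewrite /bq trmx_mul !mulmxA. Qed.

Section OLs.
Variable n : nat.
Variable G : 'M[int]_n.
Local Notation A := (gramQ G).

Lemma OL_mat g : OL G g -> g^T *m A *m g = A.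
Proof.
case=> _ [_ [_ h]]; apply/matrixP=> i j.
rewrite -[LHS]bq_delta -[RHS]bq_delta -bq_mat; apply: h; exact: inL_delta.
Qed.

Lemma OL_bq g v w : OL G g -> bq A (g *m v) (g *m w) = bq A v w.
Proof. by move=> h; rewrite bq_mat OL_mat. Qed.

Lemma OL_L g v : OL G g -> inL v -> inL (g *m v).
Proof. by case=> _ [h _]; apply: h. Qed.

Lemma OL_invL g l : OL G g -> inL l -> inL (invmx g *m l).
Proof.
case=> gu [_ [h _]] hl; have [v hv <-] := h l hl; by rewrite mulKmx.
Qed.

Lemma OL_inv g : OL G g -> OL G (invmx g).
Proof.
move=> hg; have gu := hg.1; split; first by rewrite unitmx_inv.
split; first by move=> v; apply: OL_invL.
split; first by move=> w hw; exists (g *m w); [exact: OL_L | rewrite mulKmx].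
move=> v w _ _; by rewrite -(OL_bq _ _ hg) !mulKVmx.
Qed.

Lemma OL_mul g h : OL G g -> OL G h -> OL G (g *m h).
Proof.
move=> hg hh; split; first by rewrite unitmx_mul hg.1 hh.1.
split; first by move=> v hv; rewrite -mulmxA; apply: OL_L => //; apply: OL_L.
split.
  move=> w hw; exists (invmx h *m (invmx g *m w)); first by do 2 apply: OL_invL => //.
  by rewrite -mulmxA (mulmxA h) mulmxV ?hh.1 // mul1mx mulKVmx ?hg.1.
by move=> v w _ _; rewrite -!mulmxA !OL_bq.
Qed.

Lemma OL1 : OL G 1%:M.
Proof.
split; first exact: unitmx1.
split; first by move=> v; rewrite mul1mx.
split; first by move=> w hw; exists w; rewrite ?mul1mx.
by move=> v w _ _; rewrite !mul1mx.
Qed.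

Lemma OL_dual g x : sym_gram G -> OL G g -> inDual G x -> inDual G (g *m x).
Proof.
move=> hs hg hx l hl.
have -> : l = g *m (invmx g *m l) by rewrite mulKVmx ?hg.1.
rewrite OL_bq //; apply: hx; exact: OL_invL.
Qed.

End OLs.

Lemma gramQN n (G : 'M[int]_n) : gramQ (- G) = - gramQ G.
Proof. by apply/matrixP=> i j; rewrite !mxE intrN. Qed.

Lemma bqNA n (A : 'M[rat]_n) v w : bq (- A) v w = - bq A v w.
Proof. by rewrite /bq mulmxN mulNmx mxE. Qed.

Lemma isEvenN x : isEven x -> isEven (- x).
Proof. by rewrite /isEven mulNr rpredN. Qed.
Lemma isEvenD x y : isEven x -> isEven y -> isEven (x + y).
Proof. by rewrite /isEven mulrDl => h h'; apply: rpredD. Qed.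
Lemma isEven2 x : x \is a Num.int -> isEven (x + x).
Proof.
move=> h; rewrite /isEven -mulr2n -[x *+ 2]mulr_natr -mulrA mulfV ?mulr1 //.
Qed.

Lemma inDualN n (G : 'M[int]_n) x : inDual (- G) x <-> inDual G x.
Proof.
by split=> h w hw; move: (h w hw); rewrite ?gramQN ?bqNA rpredN.
Qed.

Lemma nde_neg n (G : 'M[int]_n) : nde_lattice G -> nde_lattice (- G).
Proof.
case=> hs [he hn]; split; first by rewrite /sym_gram linearN /= hs.
split; first by move=> v hv; rewrite gramQN bqNA; apply: isEvenN; apply: he.
rewrite /nondeg_gram -scaleN1r detZ mulf_neq0 // expf_neq0 //.
Qed.

Lemma OLN n (G : 'M[int]_n) g : OL (- G) g <-> OL G g.
Proof.
rewrite /OL gramQN; split; case=> h1 [h2 [h3 h4]]; do !split => //;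
 move=> v w hv hw; move: (h4 v w hv hw); rewrite ?bqNA; [exact: oppr_inj | by move=> ->].
Qed.

Lemma sub4 (V : zmodType) (a b c d : V) : a - b - (c - d) = (a - c) - (b - d).
Proof. by rewrite !opprB addrACA [RHS]addrACA [- c - b]addrC. Qed.

Lemma col_all n1 n2 (P : 'cV[rat]_(n1 + n2) -> Prop) :
  (forall x y, P (col_mx x y)) -> forall v, P v.
Proof. by move=> h v; rewrite -[v]vsubmxK. Qed.

Section Uniq.
Variables (n1 n2 : nat) (G1 : 'M[int]_n1) (G2 : 'M[int]_n2).
Variable Gam : 'cV[rat]_(n1 + n2) -> Prop.
Hypothesis h1 : nde_lattice G1.
Hypothesis h2 : nde_lattice G2.
Hypothesis hG : good_overlattice G1 G2 Gam.

Lemma uniq2 x y y' : Gam (col_mx x y) -> Gam (col_mx x y') -> inL (y - y').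
Proof.
move=> h h'; apply: (prim2 h2 hG); rewrite -(subrr x) -col_sub; exact: (GamB hG).
Qed.
Lemma uniq1 x x' y : Gam (col_mx x y) -> Gam (col_mx x' y) -> inL (x - x').
Proof.
move=> h h'; apply: (prim1 h1 hG); rewrite -(subrr y) -col_sub; exact: (GamB hG).
Qed.
End Uniq.

Section Fwd.
Variables (n : nat) (G : 'M[int]_n).
Hypothesis hG : nde_lattice G.
Local Notation A := (gramQ G).

Definition Gd (v : 'cV[rat]_(n + n)) : Prop :=
  inDual G (usubmx v) /\ inDual G (dsubmx v) /\ inL (usubmx v - dsubmx v).

Lemma Gd_col x y : Gd (col_mx x y) <-> inDual G x /\ inDual G y /\ inL (x - y).
Proof. by rewrite /Gd col_mxKu col_mxKd. Qed.

Lemma bq_sumN x y x' y' :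
  bq (gram_sum G (- G)) (col_mx x y) (col_mx x' y') = bq A x x' - bq A y y'.
Proof. by rewrite bq_sum gramQN bqNA. Qed.

Lemma Gd_good : good_overlattice G (- G) Gd.
Proof.
have hs := hG.1.
have dL := inL_dual hs.
split; first by rewrite -col_mx0 Gd_col subrr; do !split; try exact: dual0; exact: inL0.
split.
  apply: col_all => x y; apply: col_all => x' y'; rewrite col_sub !Gd_col.
  case=> hx [hy hl] [hx' [hy' hl']]; do !split; try exact: dualB.
  by rewrite sub4; apply: inLB.
split.
  apply: col_all => x y; rewrite Gd_col col_mxKu col_mxKd; case=> hx [hy _].
  by split => //; apply/inDualN.
split.
  apply: col_all => x y /inL1_col [hx ->]; rewrite Gd_col subr0; do !split => //; try exact: dual0; exact: dL.
split.
  apply: col_all => x y /inL2_col [-> hy]; rewrite Gd_col sub0r; do !split => //; try exact: dual0; try exact: inLN; exact: dL.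
split.
  apply: col_all => x y; rewrite Gd_col; case=> hx [hy hl] k k0.
  rewrite scale_col_mx !inL1_col => -[_ /eqP]; rewrite scaler_eq0 pnatr_eq0 eqn0Ngt k0 /= => /eqP ey; subst y.
  by split => //; move: hl; rewrite subr0.
split.
  apply: col_all => x y; rewrite Gd_col; case=> hx [hy hl] k k0.
  rewrite scale_col_mx !inL2_col => -[/eqP + _]; rewrite scaler_eq0 pnatr_eq0 eqn0Ngt k0 /= => /eqP ex; subst x.
  by split => //; move: hl; rewrite sub0r => /inLN; rewrite opprK.
have key x y x' y' : inDual G x' -> inDual G y -> inL (x - y) -> inL (x' - y') ->
    bq A x x' - bq A y y' = bq A (x - y) x' + bq A y (x' - y').
  by move=> *; rewrite bqBl bqBr addrA subrK.
split.
  apply: col_all => x y; apply: col_all => x' y'; rewrite !Gd_col bq_sumN.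
  case=> hx [hy hl] [hx' [hy' hl']]; rewrite key //.
  by rewrite rpredD // ?hy // bq_sym ?gramQ_tr // hx'.
split.
  apply: col_all => x y; rewrite !Gd_col bq_sumN; case=> hx [hy hl].
  rewrite key //; have hl' := hl; move: hl'; set l := x - y => hl'.
  have -> : x = l + y by rewrite /l subrK.
  rewrite bqDr -addrA; apply: isEvenD; first by apply: hG.2.1.
  rewrite [bq A l y]bq_sym ?gramQ_tr //; apply: isEven2; exact: hy.
apply: col_all => x y h.
have hx : inDual G x.
  move=> l hl; have hw : Gd (col_mx l 0).
    by rewrite Gd_col subr0; do !split => //; try exact: dual0; exact: dL.
  by move: (h _ hw); rewrite bq_sumN bq0r subr0.
have hy : inDual G y.
  move=> l hl; have hw : Gd (col_mx 0 l).
    by rewrite Gd_col sub0r; do !split => //; try exact: dual0; try exact: inLN; exact: dL.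
  by move: (h _ hw); rewrite bq_sumN bq0r sub0r rpredN.
rewrite Gd_col; do !split => //.
apply: (@double_dual _ G _ hG) => z hz.
have hw : Gd (col_mx z z) by rewrite Gd_col subrr; do !split => //; exact: inL0.
by move: (h _ hw); rewrite bq_sumN bqBl.
Qed.

End Fwd.

Lemma bd_mul n1 n2 (a : 'M[rat]_n1) (b : 'M[rat]_n2) (x : 'cV[rat]_n1) (y : 'cV[rat]_n2) :
  block_mx a 0 0 b *m col_mx x y = col_mx (a *m x) (b *m y).
Proof. by rewrite mul_block_col !mul0mx addr0 add0r. Qed.

Lemma subKK (V : zmodType) (a b c : V) : (a - c) - (b - c) = a - b.
Proof. by rewrite opprB addrA subrK. Qed.

Section Fwd2.
Variables (n : nat) (G : 'M[int]_n).
Hypothesis hG : nde_lattice G.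
Local Notation A := (gramQ G).

Lemma Gd_ess : OL_onto_Oq G -> ess_unique G (- G) (@Gd n G).
Proof.
move=> Hon Gam' hG'.
have h2 := nde_neg hG.
have hs := hG.1.
have [f hf] : exists f : 'cV[rat]_n -> 'cV[rat]_n, forall x, inDual G x -> Gam' (col_mx x (f x)).
  exists (fun x => epsilon (inhabits 0) (fun y => Gam' (col_mx x y))) => x hx.
  have [y0 hy0] := glue1 hG hG' hx.
  by apply: (epsilon_spec (inhabits 0) (fun y => Gam' (col_mx x y))); exists y0.
have fd x : inDual G x -> inDual G (f x).
  by move=> hx; have [_ /inDualN] := Gam_dual hG' (hf x hx).
have Of : Oq G f.
  split; first exact: fd.
  split.
    move=> x y hx hy hl; rewrite -(subr0 (f x - f y)).
    have hw : Gam' (col_mx (x - y) (f x - f y)).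
      by rewrite -col_sub; apply: (GamB hG' (hf x hx) (hf y hy)).
    exact: (uniq2 h2 hG' hw (GamL1 hG' hl)).
  split.
    move=> x y hx hy.
    have hw : Gam' (col_mx (x + y) (f x + f y)).
      by rewrite -col_add; apply: (GamD hG' (hf x hx) (hf y hy)).
    exact: (uniq2 h2 hG' (hf _ (dualD hx hy)) hw).
  split.
    move=> x y hx hy hl; rewrite -(subr0 (x - y)).
    have hw : Gam' (col_mx (x - y) (f x - f y)).
      by rewrite -col_sub; apply: (GamB hG' (hf x hx) (hf y hy)).
    exact: (uniq1 hG hG' hw (GamL2 hG' hl)).
  split.
    move=> y hy; have [x hx] := glue2 h2 hG' (proj2 (inDualN G y) hy).
    have [hxd _] := Gam_dual hG' hx.
    exists x => //; exact: (uniq2 h2 hG' (hf x hxd) hx).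
  move=> x hx; have := Gam_even hG' (hf x hx); rewrite bq_sumN => /isEvenN.
  by rewrite opprB.
have [phi Ophi Iphi] := Hon f Of.
have phu := Ophi.1.
exists 1%:M, phi; split; [exact: OL1 | exact/OLN | ].
apply: col_all => x y; split.
  move=> hw; have [hx /inDualN hy] := Gam_dual hG' hw.
  exists (col_mx x (invmx phi *m y)); last by rewrite bd_mul mul1mx mulKVmx.
  rewrite Gd_col; split => //; split; first exact: (OL_dual hs (OL_inv Ophi) hy).
  rewrite -{1}(mulKmx phu x) -mulmxBr; apply: (OL_invL Ophi).
  rewrite -(subKK _ _ (f x)); apply: inLB; first exact: (Iphi x hx).
  exact: (uniq2 h2 hG' hw (hf x hx)).
case=> v; move: v; apply: col_all => x0 y0; rewrite Gd_col bd_mul mul1mx.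
case=> hx [hy hl] <-.
have -> : col_mx x0 (phi *m y0) = col_mx x0 (f x0) + col_mx 0 (phi *m y0 - f x0).
  by rewrite col_add addr0 addrC subrK.
apply: (GamD hG' (hf x0 hx)); apply: (GamL2 hG').
have -> : phi *m y0 - f x0 = phi *m (y0 - x0) + (phi *m x0 - f x0).
  by rewrite mulmxBr addrA subrK.
apply: inLD; last exact: (Iphi x0 hx).
apply: (OL_L Ophi); rewrite -opprB; exact: inLN.
Qed.

Lemma Gd_restr : restr_onto G (- G) (@Gd n G).
Proof.
have hs := hG.1.
move=> h /OLN Oh; have hu := Oh.1.
have Oi := OL_inv Oh.
exists (block_mx h 0 0 h); split.
- split; first by rewrite unitmxE det_ublock unitrM -!unitmxE hu.
  split.
    apply: col_all => x y; rewrite bd_mul !Gd_col; case=> hx [hy hl].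
    split; first exact: (OL_dual hs Oh hx).
    split; first exact: (OL_dual hs Oh hy).
    rewrite -mulmxBr; exact: (OL_L Oh hl).
  split.
    apply: col_all => x y; rewrite Gd_col; case=> hx [hy hl].
    exists (col_mx (invmx h *m x) (invmx h *m y)); last by rewrite bd_mul !mulKVmx.
    rewrite Gd_col; split; first exact: (OL_dual hs Oi hx).
    split; first exact: (OL_dual hs Oi hy).
    rewrite -mulmxBr; exact: (OL_invL Oh hl).
  apply: col_all => x y; apply: col_all => x' y' _ _.
  by rewrite !bd_mul !bq_sumN !(OL_bq _ _ Oh).
- apply: col_all => x y /inL2_col [-> hy]; rewrite bd_mul mulmx0 inL2_col; split => //.
  exact: (OL_L Oh hy).
- apply: col_all => x y /inL2_col [-> hy]; exists (col_mx 0 (invmx h *m y)).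
    rewrite inL2_col; split => //; exact: (OL_invL Oh hy).
  by rewrite bd_mul mulmx0 mulKVmx.
- by move=> y hy; rewrite bd_mul mulmx0.
Qed.

End Fwd2.

Lemma isEvenB x y : isEven x -> isEven y -> isEven (x - y).
Proof. by move=> h h'; apply: isEvenD => //; apply: isEvenN. Qed.

Lemma isEven_int x : isEven (x + x) -> x \is a Num.int.
Proof.
rewrite /isEven -mulr2n -[x *+ 2]mulr_natr -mulrA mulfV ?mulr1 //.
Qed.

Lemma alg1 (V : zmodType) (a b c : V) : (a - b) - (a - c) = c - b.
Proof. by rewrite opprB addrC addrA subrK. Qed.
Lemma alg3 (V : zmodType) (a b c a' b' c' : V) : (a + b + c) - (a' + b' + c') = (a - a') + (b - b') + (c - c').
Proof. by rewrite !opprD addrACA (addrACA a). Qed.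
Lemma alg6 (V : zmodType) (x y z : V) : x + y + z - x - z = y.
Proof. by rewrite addrAC addrK addrC addKr. Qed.
Lemma alg7 (V : zmodType) (p q r s t u : V) :
  (p + r + (r + q)) - (s + u + (u + t)) - (p - s) - (q - t) = (r - u) + (r - u).
Proof. by rewrite !addrA -(addrA p r r) -(addrA s u u) alg3 alg6 opprD addrACA addrA. Qed.
Lemma alg4 (V : zmodType) (a b c d : V) : a + b + (c + d) - a = b + c + d.
Proof. by rewrite addrAC [a + b]addrC addrK addrA. Qed.

Section OqFacts.
Variables (n : nat) (G : 'M[int]_n).
Hypothesis hG : nde_lattice G.
Local Notation A := (gramQ G).
Variable f : 'cV[rat]_n -> 'cV[rat]_n.
Hypothesis Of : Oq G f.

Let hs := hG.1.

Lemma Oq_dual x : inDual G x -> inDual G (f x).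
Proof. by case: Of => h _; apply: h. Qed.
Lemma Oq_wd x y : inDual G x -> inDual G y -> inL (x - y) -> inL (f x - f y).
Proof. by case: Of => _ [h _]; apply: h. Qed.
Lemma Oq_add x y : inDual G x -> inDual G y -> inL (f (x + y) - (f x + f y)).
Proof. by case: Of => _ [_ [h _]]; apply: h. Qed.
Lemma Oq_inj x y : inDual G x -> inDual G y -> inL (f x - f y) -> inL (x - y).
Proof. by case: Of => _ [_ [_ [h _]]]; apply: h. Qed.
Lemma Oq_surj y : inDual G y -> exists2 x, inDual G x & inL (f x - y).
Proof. by case: Of => _ [_ [_ [_ [h _]]]]; apply: h. Qed.
Lemma Oq_q x : inDual G x -> isEven (bq A (f x) (f x) - bq A x x).
Proof. by case: Of => _ [_ [_ [_ [_ h]]]]; apply: h. Qed.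

Lemma Oq_f0 : inL (f 0).
Proof.
have := Oq_add (dual0 G) (dual0 G); rewrite addr0 opprD addrA subrr add0r.
by move/inLN; rewrite opprK.
Qed.

Lemma Oq_sub x y : inDual G x -> inDual G y -> inL (f (x - y) - (f x - f y)).
Proof.
move=> hx hy; have := Oq_add (dualB hx hy) hy; rewrite subrK => /inLN.
by rewrite !opprD !opprK addrC -!addrA [f y - _]addrC.
Qed.

Lemma bq_shift x x' u u' : inDual G u -> inDual G u' -> inL (x - u) -> inL (x' - u') ->
  bq A x x' - bq A u u' \is a Num.int.
Proof.
move=> hu hu' hl hl'.
have [l hl0 ->] : exists2 l, inL l & x = u + l by exists (x - u); rewrite // addrC subrK.
have [l' hl0' ->] : exists2 l, inL l & x' = u' + l by exists (x' - u'); rewrite // addrC subrK.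
rewrite bqDl !bqDr alg4.
apply: rpredD; last exact: (bqL_int G hl0 hl0').
apply: rpredD; first by apply: hu.
by rewrite bq_sym ?gramQ_tr //; apply: hu'.
Qed.

Lemma q_shift x u : inDual G u -> inL (x - u) -> isEven (bq A x x - bq A u u).
Proof.
move=> hu hl.
have [l hl0 ->] : exists2 l, inL l & x = u + l by exists (x - u); rewrite // addrC subrK.
rewrite bqDl !bqDr alg4.
apply: isEvenD; last by apply: hG.2.1.
rewrite [bq A l u]bq_sym ?gramQ_tr //; apply: isEven2; exact: hu.
Qed.

Lemma Oq_bq x y : inDual G x -> inDual G y -> bq A (f x) (f y) - bq A x y \is a Num.int.
Proof.
move=> hx hy; apply: isEven_int.
have hxy := dualD hx hy.
have e1 := Oq_q hxy.
have e2 : isEven (bq A (f (x + y)) (f (x + y)) - bq A (f x + f y) (f x + f y)).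
  apply: q_shift; first by apply: dualD; apply: Oq_dual.
  exact: Oq_add.
have e12 := isEvenB e1 e2; rewrite alg1 in e12.
have e3 := isEvenB (isEvenB e12 (Oq_q hx)) (Oq_q hy).
move: e3; rewrite !bqDl !bqDr.
rewrite [bq A (f y) (f x)]bq_sym ?gramQ_tr // [bq A y x]bq_sym ?gramQ_tr //.
by rewrite alg7.
Qed.

End OqFacts.

Lemma alg8 (V : zmodType) (a b c d : V) : a + b = (a - c) + (c - d) + (d + b).
Proof. by rewrite [(a - c) + _]addrA subrK addrA subrK. Qed.

Section Conv.
Variables (n1 n2 : nat) (G1 : 'M[int]_n1) (G2 : 'M[int]_n2).
Variable Gam : 'cV[rat]_(n1 + n2) -> Prop.
Hypothesis h1 : nde_lattice G1.
Hypothesis h2 : nde_lattice G2.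
Hypothesis hG : good_overlattice G1 G2 Gam.
Variable f : 'cV[rat]_n1 -> 'cV[rat]_n1.
Hypothesis Of : Oq G1 f.
Local Notation A1 := (gramQ G1).

Definition Gp (w : 'cV[rat]_(n1 + n2)) : Prop :=
  inDual G1 (usubmx w) /\ exists x0, Gam (col_mx x0 (dsubmx w)) /\ inL (usubmx w - f x0).

Lemma Gp_col x y : Gp (col_mx x y) <-> inDual G1 x /\ exists x0, Gam (col_mx x0 y) /\ inL (x - f x0).
Proof. by rewrite /Gp col_mxKu col_mxKd. Qed.

Lemma GpL1 x : inL x -> Gp (col_mx x 0).
Proof.
move=> hx; rewrite Gp_col; split; first exact: (inL_dual h1.1 hx).
exists 0; split; first by rewrite col_mx0; exact: (Gam0 hG).
apply: inLB => //; exact: (Oq_f0 Of).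
Qed.

Lemma GpL2 y : inL y -> Gp (col_mx 0 y).
Proof.
move=> hy; rewrite Gp_col; split; first exact: dual0.
exists 0; split; first exact: (GamL2 hG hy).
apply: inLB; [exact: inL0 | exact: (Oq_f0 Of)].
Qed.

Lemma Gp_good : good_overlattice G1 G2 Gp.
Proof.
have hs := h1.1.
split; first by rewrite -col_mx0; apply: GpL1; exact: inL0.
split.
  apply: col_all => x y; apply: col_all => x' y'; rewrite !Gp_col col_sub Gp_col.
  case=> hx [x0 [g0 l0]] [hx' [x0' [g0' l0']]].
  have [hx0 _] := Gam_dual hG g0; have [hx0' _] := Gam_dual hG g0'.
  split; first exact: dualB.
  exists (x0 - x0'); split; first by rewrite -col_sub; exact: (GamB hG g0 g0').
  have -> : x - x' - f (x0 - x0') = (x - f x0) - (x' - f x0') - (f (x0 - x0') - (f x0 - f x0')).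
    by rewrite (sub4 x (f x0) x' (f x0')) subKK.
  apply: inLB; first exact: inLB.
  exact: (Oq_sub Of hx0 hx0').
split.
  apply: col_all => x y; rewrite Gp_col col_mxKu col_mxKd; case=> hx [x0 [g0 _]].
  by split => //; have [_ ?] := Gam_dual hG g0.
split; first by apply: col_all => x y /inL1_col [hx ->]; exact: GpL1.
split; first by apply: col_all => x y /inL2_col [-> hy]; exact: GpL2.
split.
  apply: col_all => x y; rewrite Gp_col; case=> hx [x0 [g0 l0]] k k0.
  rewrite scale_col_mx !inL1_col => -[_ /eqP]; rewrite scaler_eq0 pnatr_eq0 eqn0Ngt k0 /= => /eqP ey; subst y.
  split => //.
  have hx0L := prim1 h1 hG g0.
  have [hx0 _] := Gam_dual hG g0.
  have hf0 : inL (f x0 - f 0) by apply: (Oq_wd Of hx0 (dual0 G1)); rewrite subr0.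
  have hfx0 : inL (f x0) by rewrite -(subrK (f 0) (f x0)); apply: inLD => //; exact: (Oq_f0 Of).
  by rewrite -(subrK (f x0) x); apply: inLD.
split.
  apply: col_all => x y; rewrite Gp_col; case=> hx [x0 [g0 l0]] k k0.
  rewrite scale_col_mx !inL2_col => -[/eqP + hky]; rewrite scaler_eq0 pnatr_eq0 eqn0Ngt k0 /= => /eqP ex; subst x.
  split => //.
  have [hx0 _] := Gam_dual hG g0.
  have hfx0 : inL (f x0) by move: l0; rewrite sub0r => /inLN; rewrite opprK.
  have hf0 : inL (f x0 - f 0) by apply: inLB => //; exact: (Oq_f0 Of).
  have hx0L : inL x0 by move: (Oq_inj Of hx0 (dual0 G1) hf0); rewrite subr0.
  have g1 : Gam (col_mx 0 y).
    by rewrite -(subrr x0) -(subr0 y) -col_sub; apply: (GamB hG g0); exact: (GamL1 hG hx0L).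
  case: hG => _ [_ [_ [_ [_ [_ [p _]]]]]].
  have : inL2 (col_mx (0 : 'cV[rat]_n1) y).
    by apply: (p _ g1 k k0); rewrite scale_col_mx scaler0 inL2_col.
  by case/inL2_col.
split.
  apply: col_all => x y; apply: col_all => x' y'; rewrite !Gp_col bq_sum.
  case=> hx [x0 [g0 l0]] [hx' [x0' [g0' l0']]].
  have [hx0 _] := Gam_dual hG g0; have [hx0' _] := Gam_dual hG g0'.
  rewrite (alg8 _ _ (bq A1 (f x0) (f x0')) (bq A1 x0 x0')).
  apply: rpredD; last by rewrite -bq_sum; exact: (Gam_int hG g0 g0').
  apply: rpredD; last exact: (Oq_bq h1 Of hx0 hx0').
  exact: (bq_shift h1 (Oq_dual Of hx0) (Oq_dual Of hx0') l0 l0').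
split.
  apply: col_all => x y; rewrite !Gp_col bq_sum.
  case=> hx [x0 [g0 l0]].
  have [hx0 _] := Gam_dual hG g0.
  rewrite (alg8 _ _ (bq A1 (f x0) (f x0)) (bq A1 x0 x0)).
  apply: isEvenD; last by rewrite -bq_sum; exact: (Gam_even hG g0).
  apply: isEvenD; last exact: (Oq_q Of hx0).
  exact: (q_shift h1 (Oq_dual Of hx0) l0).
apply: col_all => x y h.
have hx : inDual G1 x.
  by move=> l hl; have := h _ (GpL1 hl); rewrite bq_sum bq0r addr0.
have [x0 hx0 l0] := Oq_surj Of hx.
rewrite Gp_col; split => //; exists x0; split; last first.
  by move/inLN: l0; rewrite opprB.
apply: (Gam_unimod hG); apply: col_all => u z hw.
have [hu _] := Gam_dual hG hw.
have hw' : Gp (col_mx (f u) z).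
  rewrite Gp_col; split; first exact: (Oq_dual Of hu).
  by exists u; split => //; rewrite subrr; exact: inL0.
have := h _ hw'; rewrite !bq_sum => hi.
rewrite (alg8 _ _ (bq A1 (f x0) (f u)) (bq A1 x (f u))).
apply: rpredD; last exact: hi.
apply: rpredD.
  by rewrite -opprB rpredN; exact: (Oq_bq h1 Of hx0 hu).
rewrite -bqBl bq_sym ?gramQ_tr //; apply: (Oq_dual Of hu); exact: l0.
Qed.

End Conv.

Lemma mx_ext m n (M N : 'M[rat]_(m, n)) : (forall y, inL y -> M *m y = N *m y) -> M = N.
Proof.
move=> H; apply/matrixP => i j.
have := congr1 (fun v : 'cV[rat]_m => v i ord0) (H _ (inL_delta j)).
by rewrite -!colE !mxE.
Qed.

Lemma form_mat n (M g : 'M[rat]_n) :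
  (forall v w, inL v -> inL w -> bq M (g *m v) (g *m w) = bq M v w) -> g^T *m M *m g = M.
Proof.
move=> h; apply/matrixP=> i j.
rewrite -[LHS]bq_delta -[RHS]bq_delta -bq_mat; apply: h; exact: inL_delta.
Qed.

Lemma GamInt n1 n2 (G1 : 'M[int]_n1) (G2 : 'M[int]_n2) Gam :
  good_overlattice G1 G2 Gam -> forall v, inL v -> Gam v.
Proof.
move=> hG; apply: col_all => x y /inLE /intmx_col [hx hy].
rewrite -[x]addr0 -[y]add0r -col_add.
apply: (GamD hG); [apply: (GamL1 hG) | apply: (GamL2 hG)]; exact/inLE.
Qed.

Lemma conv n1 n2 (G1 : 'M[int]_n1) (G2 : 'M[int]_n2) Gam :
  nde_lattice G1 -> nde_lattice G2 -> good_overlattice G1 G2 Gam ->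
  ess_unique G1 G2 Gam -> restr_onto G1 G2 Gam -> OL_onto_Oq G1.
Proof.
move=> h1 h2 hG hE hR f Of.
have hG' := Gp_good h1 hG Of.
have [phi1 [phi2 [O1 O2 eG]]] := hE _ hG'.
have [g [Og pL2 oL2 eg]] := hR _ (OL_inv O2).
have p2u := O2.1.
have hu : invmx phi2 \in unitmx by rewrite unitmx_inv.
have eg0 : g = block_mx (ulsubmx g) (ursubmx g) (dlsubmx g) (drsubmx g) by rewrite submxK.
have eur : ursubmx g = 0.
  apply: mx_ext => y hy; rewrite mul0mx.
  have := eg y hy; rewrite {1}eg0 mul_block_col !mulmx0 !add0r => /eq_col_mx [-> _].
  done.
have edr : drsubmx g = invmx phi2.
  apply: mx_ext => y hy.
  have := eg y hy; rewrite {1}eg0 mul_block_col !mulmx0 !add0r => /eq_col_mx [_ ->].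
  by [].
rewrite eur edr in eg0.
have fm : g^T *m gram_sum G1 G2 *m g = gram_sum G1 G2.
  apply: form_mat => v w hv hw; case: Og => _ [_ [_ h]]; apply: h; exact: (GamInt hG).
have A2u := gram_unit h2.2.2.
move: fm; rewrite eg0 /gram_sum tr_block_mx trmx0 !mulmx_block.
rewrite !mulmx0 !mul0mx !addr0 !add0r.
case/eq_block_mx => e11 _ e21 _.
have e3 : dlsubmx g = 0.
  have hA : (invmx phi2)^T *m gramQ G2 \in unitmx by rewrite unitmx_mul unitmx_tr hu A2u.
  move: e21; rewrite mul0mx add0r => e21.
  by rewrite -(mulKmx hA (dlsubmx g)) e21 mulmx0.
rewrite e3 in eg0 e11.
move: e11; rewrite trmx0 !mulmx0 addr0 => e11.
have gu : (ulsubmx g) \in unitmx.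
  by have := Og.1; rewrite {1}eg0 unitmxE det_ublock unitrM -unitmxE => /andP [+ _].
have Og1 : OL G1 (ulsubmx g).
  split => //.
  split.
    move=> v hv; apply: (prim1 h1 hG).
    have : Gam (g *m col_mx v 0) by apply: Og.2.1; exact: (GamL1 hG).
    by rewrite {1}eg0 bd_mul mulmx0.
  split.
    move=> w hw; have [v hv ev] := Og.2.2.1 _ (GamL1 hG hw).
    move: hv ev; rewrite -[v]vsubmxK {1}eg0 bd_mul => hv /eq_col_mx [e1 e2].
    have eb : dsubmx v = 0 by rewrite -(mulKVmx p2u (dsubmx v)) e2 mulmx0.
    exists (usubmx v) => //; apply: (prim1 h1 hG); by rewrite -eb.
  by move=> v w _ _; rewrite bq_mat e11.
exists (phi1 *m (ulsubmx g)); first exact: OL_mul.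
move=> x hx.
have [y hy] := glue1 h1 hG hx.
have hgy : Gam (g *m col_mx x y) by apply: Og.2.1.
have : Gp G1 Gam f (col_mx (phi1 *m (ulsubmx g) *m x) y).
  apply/eG; exists (g *m col_mx x y) => //.
  by rewrite {1}eg0 !bd_mul mulKVmx // mulmxA.
rewrite Gp_col => -[_ [x0 [g0 l0]]].
have [hx0 _] := Gam_dual hG g0.
have l1 := Oq_wd Of hx0 hx (uniq1 h1 hG g0 hy).
by rewrite -(subrK (f x0) (phi1 *m (ulsubmx g) *m x)) -addrA; apply: inLD.
Qed.


Theorem proposition5p3 (n1 : nat) (G1 : 'M[int]_n1) :
  nde_lattice G1 ->
  (OL_onto_Oq G1 <->
   exists n2 : nat, exists G2 : 'M[int]_n2,
     nde_lattice G2 /\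
     exists Gam : 'cV[rat]_(n1 + n2) -> Prop,
       [/\ good_overlattice G1 G2 Gam, ess_unique G1 G2 Gam & restr_onto G1 G2 Gam]).
Proof.
move=> hG; split.
  move=> Hon; exists n1, (- G1); split; first exact: nde_neg.
  exists (@Gd n1 G1); split; [exact: Gd_good | exact: Gd_ess | exact: Gd_restr].
case=> n2 [G2 [h2 [Gam [hgood hess hres]]]].
exact: (conv hG h2 hgood hess hres).
Qed.
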